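(* Let $k\ge 1$ be a fixed integer, and for each $q\ge 1$ let $f_q:\{0,1\}^q\to\{0,1,\ldots,2^q-1\}$ be the Hamming-distance-based bijection. Then \[ \lim_{q\to\infty} d_{\max,k}(f_q)=0 \quad\text{and}\quad \lim_{q\to\infty} d_{\mathrm{ave},k}(f_q)=0 . \]
   Context: For an integer $q\ge1$ and binary arrays $x_1,x_2\in\{0,1\}^q$, let $w_H(x)$ be the Hamming weight of $x$ (number of ones) and $d_H(x_1,x_2)$ the Hamming distance. Define a total order $\succeq$ on $\{0,1\}^q$ by: $b_1\succeq b_2$ iff either $w_H(b_1)>w_H(b_2)$, or $w_H(b_1)=w_H(b_2)$ and $b_1$ is lexicographically greater than or equal to $b_2$. The Hamming-distance-based bijection $f_q:\{0,1\}^q\to\{0,1,\ldots,2^q-1\}$ is the unique bijection such that for all $b_1,b_2$, $f_q(b_1)\ge f_q(b_2)\iff b_1\succeq b_2$ (so the all-zero array maps to $0$, the arrays of weight $1$ come next, etc.). For a bijection $f:\{0,1\}^q\to\{0,\ldots,2^q-1\}$ define the distortion $d(f,b_1,b_2)=|f(b_1)-f(b_2)|/2^q$. For a fixed integer $k\ge1$ and $b\in\{0,1\}^q$, let $N_k(b)=\{x\in\{0,1\}^q: 1\le d_H(b,x)\le k\}$, and set $d_{\max,k}(f,b)=\max_{x\in N_k(b)} d(f,b,x)$, $d_{\mathrm{ave},k}(f,b)=\frac{1}{|N_k(b)|}\sum_{x\in N_k(b)} d(f,b,x)$, $d_{\max,k}(f)=\max_{b\in\{0,1\}^q} d_{\max,k}(f,b)$,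 and $d_{\mathrm{ave},k}(f)=\frac{1}{2^q}\sum_{b\in\{0,1\}^q} d_{\mathrm{ave},k}(f,b)$. *)

(* Defs.v *)
From HB Require Import structures.
From mathcomp Require Import all_boot all_order all_algebra.
Set Implicit Arguments. Unset Strict Implicit. Unset Printing Implicit Defensive.
Import Order.TTheory GRing.Theory Num.Theory.

Definition bits (q : nat) := {ffun 'I_q -> bool}.

Definition wH q (x : bits q) : nat := #|[set i : 'I_q | x i]|.
Definition dH q (x y : bits q) : nat := #|[set i : 'I_q | x i != y i]|.

Definition lex_lt q (x y : bits q) : bool :=
  [exists i : 'I_q, [&& ~~ x i, y i & [forall j : 'I_q, (j < i)%N ==> (x j == y j)]]].

Definition hprec q (y x : bits q) : bool :=
  (wH y < wH x)%N || ((wH y == wH x) && lex_lt y x).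

(* Hamming-distance-based bijection: f_q(b) = number of arrays strictly below b,
   i.e. the rank of b in the order ⪰ (the unique order-preserving bijection
   onto {0,...,2^q-1}). *)
Definition fH q (b : bits q) : nat := #|[set x : bits q | hprec x b]|.

Local Open Scope ring_scope.

Definition distortion q (f : bits q -> nat) (b1 b2 : bits q) : rat :=
  `|(f b1)%:R - (f b2)%:R| / (2 ^ q)%:R.

Definition Nk q (k : nat) (b : bits q) : {set bits q} :=
  [set x : bits q | (1 <= dH b x <= k)%N].

(* all distortions are >= 0, so the max starting from 0 is the max over N_k(b) *)
Definition dmax_at q (k : nat) (f : bits q -> nat) (b : bits q) : rat :=
  \big[Num.max/0]_(x in Nk k b) distortion f b x.

Definition dave_at q (k : nat) (f : bits q -> nat) (b : bits q) : rat :=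
  (\sum_(x in Nk k b) distortion f b x) / (#|Nk k b|)%:R.

Definition dmax q (k : nat) (f : bits q -> nat) : rat :=
  \big[Num.max/0]_(b : bits q) dmax_at k f b.

Definition dave q (k : nat) (f : bits q -> nat) : rat :=
  (\sum_(b : bits q) dave_at k f b) / (2 ^ q)%:R.

(* Main.v *)
Require Import Defs.
From HB Require Import structures.
From mathcomp Require Import all_boot all_order all_algebra.
From mathcomp Require Import zify ring lra.
Import Order.TTheory GRing.Theory Num.Theory.

Lemma half2 q : (q./2).*2 <= q.
Proof. by rewrite -{2}(odd_double_half q); lia. Qed.
Lemma half2' q : q <= (q./2).*2.+1.
Proof. by rewrite -{1}(odd_double_half q); case: odd; lia. Qed.

Lemma bin_mono q j : j < q./2 -> 'C(q, j) <= 'C(q, j.+1).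
Proof.
move=> hj.
have h := mul_bin_left q j.
have hq := half2 q.
have : j.+1 * 'C(q, j) <= j.+1 * 'C(q, j.+1).
  rewrite h leq_mul2r; apply/orP; right.
  rewrite -!muln2 in hq *. lia.
by rewrite leq_mul2l.
Qed.

Lemma bin_le_mid q w : 'C(q, w) <= 'C(q, q./2).
Proof.
have hq := half2 q. have hq' := half2' q.
rewrite -!muln2 in hq hq'.
have low : forall i, 'C(q, q./2 - i) <= 'C(q, q./2).
  elim=> [|i IH]; first by rewrite subn0.
  case: (leqP q./2 i) => hi.
    by rewrite (_ : q./2 - i.+1 = q./2 - i) //; lia.
  apply: leq_trans IH.
  have -> : q./2 - i = (q./2 - i.+1).+1 by lia.
  apply: bin_mono; lia.
case: (leqP w q./2) => hw.
  have := low (q./2 - w). by rewrite (_ : q./2 - (q./2 - w) = w) //; lia.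
case: (leqP w q) => hwq; last by rewrite bin_small.
rewrite -bin_sub //.
have := low (q./2 - (q - w)). by rewrite (_ : q./2 - (q./2 - (q - w)) = q - w) //; lia.
Qed.

Lemma central n : 'C(n.*2, n) ^ 2 * n.*2.+1 <= 16 ^ n.
Proof.
elim: n => [|n IH] //.
have e1 := mul_bin_diag n.*2.+2 n.
have e2 := mul_bin_left n.*2.+1 n.
have e3 := binS n.*2.+1 n.
have e4 := mul_bin_diag n.*2.+1 n.
rewrite /= in e1 e4.
have e2' : 'C(n.*2.+1, n.+1) = 'C(n.*2.+1, n).
  apply/eqP; rewrite -(eqn_pmul2l (ltn0Sn n)) e2; apply/eqP; congr (_ * _); lia.
have rec : n.+1 * 'C((n.+1).*2, n.+1) = 2 * n.*2.+1 * 'C(n.*2, n).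
  rewrite doubleS e3 -mulnA e4 e2'; lia.
rewrite -(leq_pmul2l (_ : 0 < n.+1 ^ 2)) ?expn_gt0 //.
set c := 'C(n.*2, n) in rec IH *. set c' := 'C((n.+1).*2, n.+1) in rec *.
have -> : n.+1 ^ 2 * (c' ^ 2 * (n.+1).*2.+1) = (n.+1 * c')^2 * (n.+1).*2.+1.
  by rewrite expnMn mulnA.
rewrite rec expnS.
apply: (@leq_trans (4 * (n.*2.+1 * (n.*2.+3)) * 16 ^ n)).
  have -> : (2 * n.*2.+1 * c) ^ 2 * (n.+1).*2.+1 = 4 * (n.*2.+1 * (n.*2.+3)) * (c ^ 2 * n.*2.+1).
    rewrite doubleS -!muln2; ring.
  by rewrite leq_mul2l IH orbT.
rewrite (expnS 16 n) [X in _ <= X]mulnA leq_mul2r; apply/orP; right. rewrite -!muln2. nia.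
Qed.

Lemma bin_bound q w : 'C(q, w) ^ 2 * q.+1 <= 4 * 4 ^ q.
Proof.
have hm := bin_le_mid q w.
have e16 : forall n, 16 ^ n = 4 ^ n.*2 by move=> n; rewrite -muln2 mulnC expnM.
have hsq : 'C(q, w) ^ 2 <= 'C(q, q./2) ^ 2 by rewrite leq_exp2r.
have [n [eq|eq]] : exists n, q = n.*2 \/ q = n.*2.+1.
  exists q./2; rewrite -{1 3}(odd_double_half q); case: odd; by [left|right].
- rewrite eq doubleK in hsq; rewrite eq.
  have h2 := central n. rewrite e16 in h2.
  apply: leq_trans (leq_trans _ h2) _; first by rewrite leq_mul2r hsq orbT.
  by rewrite leq_pmull.
- rewrite eq /= uphalf_double in hsq; rewrite eq.
  have h1 : 'C(n.*2.+1, n) <= 'C(n.+1.*2, n.+1) by rewrite doubleS binS leq_addl.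
  have h2 := central n.+1.
  rewrite e16 doubleS -[4 ^ n.*2.+2]/(4 * 4 ^ n.*2.+1) in h2.
  apply: leq_trans h2.
  apply: leq_mul; last by lia.
  apply: leq_trans hsq _. by rewrite leq_exp2r.
Qed.

Definition setOf {q} (y : bits q) : {set 'I_q} := [set i | y i].

Lemma setOf_inj q : injective (@setOf q).
Proof.
move=> y z e; apply/ffunP => i.
have : (i \in setOf y) = (i \in setOf z) by rewrite e.
by rewrite !inE.
Qed.

Lemma card_weight q w : #|[set y : bits q | wH y == w]| = 'C(q, w).
Proof.
rewrite -(card_imset _ (@setOf_inj q)) -[in RHS](card_ord q) -card_draws.
apply: eq_card => A; rewrite [in RHS]inE; apply/imsetP/idP.
- by move=> [y]; rewrite inE => /eqP <- ->.
- move=> hA; exists [ffun i => i \in A]; last by apply/setP => i; rewrite !inE ffunE.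
  rewrite inE /wH; rewrite (_ : [set i | _] = A) //; by apply/setP => i; rewrite inE ffunE.
Qed.

Lemma band q lo d : #|[set y : bits q | lo <= wH y < lo + d]| <= d * 'C(q, q./2).
Proof.
elim: d => [|d IH].
  rewrite mul0n leqn0 cards_eq0; apply/eqP/setP => y; rewrite !inE addn0.
  by case: leqP.
rewrite (_ : [set y : bits q | lo <= wH y < lo + d.+1] =
   [set y : bits q | lo <= wH y < lo + d] :|: [set y : bits q | wH y == lo + d]).
  apply: leq_trans (leq_card_setU _ _) _.
  by rewrite mulSn addnC leq_add // card_weight bin_le_mid.
apply/setP => y; rewrite !inE. case: (ltngtP (wH y) (lo + d)); lia.
Qed.

Lemma wH_dist q (b x : bits q) : wH b <= wH x + dH b x.
Proof.
rewrite /wH /dH; apply: leq_trans (leq_card_setU _ _).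
apply: subset_leq_card; apply/subsetP => i; rewrite !inE.
by case: (b i); case: (x i).
Qed.

Lemma fH_lo q (b : bits q) lo : lo <= wH b -> #|[set y : bits q | wH y < lo]| <= fH b.
Proof.
move=> h; apply: subset_leq_card; apply/subsetP => y; rewrite !inE /hprec => hy.
by rewrite (leq_trans hy h).
Qed.

Lemma fH_hi q (b : bits q) lo d : lo <= wH b < lo + d ->
  fH b <= #|[set y : bits q | wH y < lo]| + #|[set y : bits q | lo <= wH y < lo + d]|.
Proof.
move=> /andP[h1 h2]; apply: leq_trans (leq_card_setU _ _).
apply: subset_leq_card; apply/subsetP => y; rewrite !inE /hprec.
have: wH y <= wH b -> (wH y < lo) || (lo <= wH y < lo + d).
  move=> hh; case: (ltnP (wH y) lo) => //= _. exact: leq_ltn_trans hh h2.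
move=> H hp; apply: H; move: hp; case/orP => [/ltnW|/andP[/eqP -> _]] //.
Qed.

Lemma wH_dist' q (b x : bits q) : wH x <= wH b + dH b x.
Proof.
rewrite /wH /dH; apply: leq_trans (leq_card_setU _ _).
apply: subset_leq_card; apply/subsetP => i; rewrite !inE.
by case: (b i); case: (x i).
Qed.

Arguments wH_dist {q}. Arguments wH_dist' {q}. Arguments fH_lo {q b lo}. Arguments fH_hi {q b lo d}.
Local Open Scope ring_scope.

Definition Dq (k q : nat) : rat := (k.+1 * 'C(q, q./2))%:R / (2 ^ q)%:R.

Lemma dist_bound q k (b x : bits q) : x \in Nk k b -> distortion (@fH q) b x <= Dq k q.
Proof.
rewrite inE => /andP[_ hk].
set lo := minn (wH b) (wH x).
have hb : (lo <= wH b < lo + k.+1)%N.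
  have := wH_dist b x; have := wH_dist' b x; rewrite /lo; lia.
have hx : (lo <= wH x < lo + k.+1)%N.
  have := wH_dist b x; have := wH_dist' b x; rewrite /lo; lia.
have a1 := fH_lo (andP hb).1. have a2 := fH_lo (andP hx).1.
have b1 := fH_hi hb. have b2 := fH_hi hx.
have c := band q lo k.+1.
rewrite /distortion /Dq ler_pM2r ?invr_gt0 ?ltr0n ?expn_gt0 //.
set A := #|_| in a1 a2 b1 b2. set B := #|_| in b1 b2 c.
have e1 : (A%:R : rat) <= (fH b)%:R by rewrite ler_nat.
have e2 : (A%:R : rat) <= (fH x)%:R by rewrite ler_nat.
have e3 : ((fH b)%:R : rat) <= A%:R + B%:R by rewrite -natrD ler_nat.
have e4 : ((fH x)%:R : rat) <= A%:R + B%:R by rewrite -natrD ler_nat.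
have e5 : (B%:R : rat) <= (k.+1 * 'C(q, q./2))%:R by rewrite ler_nat.
rewrite ler_norml; apply/andP; split; lra.
Qed.

Lemma dist_ge0 q (f : bits q -> nat) b x : 0 <= distortion f b x.
Proof. by rewrite /distortion divr_ge0. Qed.

Lemma Dq_ge0 k q : 0 <= Dq k q.
Proof. by rewrite /Dq divr_ge0. Qed.

Lemma dmax_bound k q : 0 <= dmax k (@fH q) <= Dq k q.
Proof.
apply/andP; split.
  apply: (big_ind (fun v => 0 <= v)) => //; first by move=> u v hu hv; rewrite le_max hu.
  move=> b _; apply: (big_ind (fun v => 0 <= v)) => //; first by move=> u v hu hv; rewrite le_max hu.
  by move=> x _; apply: dist_ge0.
apply: (big_ind (fun v => v <= Dq k q)); first exact: Dq_ge0.
  by move=> u v hu hv; rewrite ge_max hu hv.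
move=> b _; apply: (big_ind (fun v => v <= Dq k q)); first exact: Dq_ge0.
  by move=> u v hu hv; rewrite ge_max hu hv.
by move=> x hx; apply: dist_bound.
Qed.

Lemma avg_le (T : finType) (A : pred T) (F : T -> rat) D :
  0 <= D -> (forall x, x \in A -> 0 <= F x <= D) ->
  0 <= (\sum_(x in A) F x) / (#|A|)%:R <= D.
Proof.
move=> hD hF.
have s0 : 0 <= \sum_(x in A) F x by apply: sumr_ge0 => x /hF /andP[].
have s1 : \sum_(x in A) F x <= \sum_(x in A) D by apply: ler_sum => x /hF /andP[].
rewrite sumr_const -mulr_natr in s1.
apply/andP; split; first by rewrite divr_ge0.
case: (posnP #|A|) => hA.
  by rewrite hA invr0 mulr0.
rewrite ler_pdivrMr ?ltr0n //.
Qed.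

Lemma avg_le2 (T : finType) (F : T -> rat) D :
  0 <= D -> (forall x, 0 <= F x <= D) ->
  0 <= (\sum_(x : T) F x) / (#|T|)%:R <= D.
Proof.
move=> hD hF.
have s0 : 0 <= \sum_(x : T) F x by apply: sumr_ge0 => x _; case/andP: (hF x).
have s1 : \sum_(x : T) F x <= \sum_(x : T) D by apply: ler_sum => x _; case/andP: (hF x).
rewrite sumr_const -mulr_natr in s1.
apply/andP; split; first by rewrite divr_ge0.
case: (posnP #|T|) => hA.
  by rewrite hA invr0 mulr0.
by rewrite ler_pdivrMr ?ltr0n.
Qed.

Lemma dave_bound k q : 0 <= dave k (@fH q) <= Dq k q.
Proof.
have hb : forall b, 0 <= dave_at k (@fH q) b <= Dq k q.
  move=> b; apply: avg_le; first exact: Dq_ge0.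
  by move=> x hx; rewrite dist_ge0 dist_bound.
have e : #|bits q| = (2 ^ q)%N by rewrite card_ffun card_ord card_bool.
rewrite /dave -e; apply: avg_le2 => //; exact: Dq_ge0.
Qed.

Lemma Dq_sq k q : Dq k q ^+ 2 * q.+1%:R <= 4 * (k.+1%:R) ^+ 2.
Proof.
have hb := bin_bound q q./2.
set C := 'C(q, q./2) in hb *.
set t : rat := (2 ^ q)%N%:R.
have tp : 0 < t by rewrite ltr0n expn_gt0.
have hr : (C%:R : rat) ^+ 2 * q.+1%:R <= 4 * t ^+ 2.
  have -> : t ^+ 2 = (4 ^ q)%N%:R by rewrite -natrX -expnM mulnC expnM.
  by rewrite -natrX -!natrM ler_nat.
have hD : Dq k q * t = k.+1%:R * C%:R by rewrite /Dq natrM mulfVK // lt0r_neq0.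
set D := Dq k q in hD *. set K : rat := k.+1%:R in hD *. set c : rat := C%:R in hr hD.
have t2 : 0 < t ^+ 2 by rewrite exprn_gt0.
rewrite -(ler_pM2r t2).
have -> : D ^+ 2 * q.+1%:R * t ^+ 2 = K ^+ 2 * (c ^+ 2 * q.+1%:R).
  by rewrite [in RHS]mulrA -exprMn -hD; ring.
have -> : 4 * K ^+ 2 * t ^+ 2 = K ^+ 2 * (4 * t ^+ 2) by ring.
by rewrite ler_pM2l // exprn_gt0 // ltr0n.
Qed.

Lemma Dq_small k (eps : rat) : 0 < eps -> exists N, forall q, (N <= q)%N -> Dq k q < eps.
Proof.
move=> he.
set M : rat := 4 * (k.+1%:R) ^+ 2 / eps ^+ 2.
have hM : 0 <= M by rewrite /M divr_ge0 // ?mulr_ge0 // ?exprn_ge0 // ltW.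
exists (Num.bound M) => q hq.
have h1 : M < q.+1%:R.
  apply: lt_le_trans (archi_boundP hM) _; rewrite ler_nat; exact: leqW.
have h2 : 4 * (k.+1%:R) ^+ 2 < eps ^+ 2 * q.+1%:R.
  move: h1; rewrite /M ltr_pdivrMr ?exprn_gt0 //.
  by rewrite [4 * _]mulrC [eps ^+ 2 * _]mulrC.
have h3 := Dq_sq k q.
have [//|hle] := ltP (Dq k q) eps.
have h4 : eps ^+ 2 <= Dq k q ^+ 2 by rewrite !expr2 ler_pM // ltW.
have h5 : eps ^+ 2 * q.+1%:R <= Dq k q ^+ 2 * q.+1%:R by rewrite ler_wpM2r.
lra.
Qed.

Theorem theorem1 (k : nat) (hk : (1 <= k)%N) :
  (forall eps : rat, 0 < eps ->
     exists N : nat, forall q : nat, (N <= q)%N -> `|dmax k (@fH q)| < eps) /\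
  (forall eps : rat, 0 < eps ->
     exists N : nat, forall q : nat, (N <= q)%N -> `|dave k (@fH q)| < eps).
Proof.
split=> eps he; have [N hN] := @Dq_small k eps he; exists N => q hq.
- have /andP[h0 h1] := dmax_bound k q.
  by rewrite ger0_norm // (le_lt_trans h1 (hN q hq)).
- have /andP[h0 h1] := dave_bound k q.
  by rewrite ger0_norm // (le_lt_trans h1 (hN q hq)).
Qed.
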